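(* Let $k=\mathbb{F}_q$ with $q=2^m\geq 4$, let $n\geq 1$, let $B$ be a finite set and let $\mathcal{P}=\coprod_{i\in B}P_i$ with each $P_i\cong\mathbb{P}^n$ over $k$, with the natural map $h\colon\mathcal{P}\to B$, $P_i\mapsto i$. Let $\sigma$ be a permutation of $\mathcal{P}(k)=\coprod_{i\in B}P_i(k)$ such that (1) for every $i\in B$ there is $j\in B$ with $\sigma(P_i(k))=P_j(k)$, so that $\sigma$ induces a permutation $\sigma_B$ of $B$; and (2) each such bijection $P_i(k)\to P_j(k)$ is induced by a projective linear isomorphism $P_i\to P_j$ defined over $k$. Then $\sigma$ and $\sigma_B$ have the same parity. *)

(* Defs.v *)
From mathcomp Require Import all_boot all_order all_fingroup all_algebra.
Set Implicit Arguments. Unset Strict Implicit. Unset Printing Implicit Defensive.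
Import GRing.Theory.
Local Open Scope ring_scope.

(* Points of P^n over a finite field F: one-dimensional subspaces of F^(n+1),
   represented as the set of vectors on the line (0 included). *)
Definition is_line (F : finFieldType) (n : nat) (L : {set 'rV[F]_n.+1}) : bool :=
  [exists v : 'rV[F]_n.+1, (v != 0) && (L == [set c *: v | c : F])].

Definition ppoint (F : finFieldType) (n : nat) :=
  {L : {set 'rV[F]_n.+1} | is_line L}.

Definition plin_img (F : finFieldType) (n : nat) (A : 'M[F]_n.+1)
  (L : {set 'rV[F]_n.+1}) : {set 'rV[F]_n.+1} :=
  [set v *m A | v in L].

(* Main.v *)
Require Import Defs.
From mathcomp Require Import all_boot all_order all_fingroup all_algebra.
From mathcomp Require Import all_field.
Set Implicit Arguments. Unset Strict Implicit. Unset Printing Implicit Defensive.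

Section OddHom.
Variables (T T' : finType) (phi : {perm T} -> {perm T'}).
Hypothesis phi1 : phi 1%g = 1%g.
Hypothesis phiM : forall s t, phi (s * t)%g = (phi s * phi t)%g.
Variable c : bool.
Hypothesis phit : forall x y, x != y -> odd_perm (phi (tperm x y)) = c.

Lemma odd_hom s : odd_perm (phi s) = c && odd_perm s.
Proof.
have [ts -> hts] := prod_tpermP s.
elim: ts hts => [|t ts IH] /=; first by rewrite big_nil phi1 !odd_perm1 andbF.
case/andP=> ht hts; rewrite !big_cons phiM !odd_permM IH // phit // odd_tperm ht.
by case: c; case: (odd_perm _).
Qed.
End OddHom.

Section Fib.
Variables (T1 T2 : finType).

Definition fib_fun (a : T1) (f : {perm T2}) (z : T1 * T2) : T1 * T2 :=
  if z.1 == a then (z.1, f z.2) else z.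

Lemma fib_inj a f : injective (fib_fun a f).
Proof.
move=> [x1 x2] [y1 y2]; rewrite /fib_fun /=.
case: eqP => [->|xa]; case: eqP => [->|ya] //.
- by case=> /perm_inj ->.
- by case=> E; rewrite E in ya.
- by case=> E; rewrite E in xa.
Qed.

Definition fibp a f : {perm T1 * T2} := perm (@fib_inj a f).

Lemma fibpE a f z : fibp a f z = fib_fun a f z.
Proof. by rewrite permE. Qed.

Lemma odd_fibp a f : odd_perm (fibp a f) = odd_perm f.
Proof.
have -> : odd_perm (fibp a f) = true && odd_perm f; last by [].
apply: (@odd_hom _ _ (fibp a)).
- by apply/permP => z; rewrite fibpE perm1 /fib_fun perm1; case: eqP => //; case: z.
- move=> s t; apply/permP => z; rewrite permM !fibpE /fib_fun permM.
  by case: eqP => /= [->|]; rewrite ?eqxx //; case: eqP.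
move=> x y xy; suff -> : fibp a (tperm x y) = tperm (a, x) (a, y).
  by rewrite odd_tperm; apply: contra xy => /eqP[->].
apply/permP => [[z1 z2]]; rewrite fibpE /fib_fun /=.
case: eqP => [->|za].
  case: tpermP => [E|E|zx zy]; subst; first by rewrite tpermL.
    by rewrite tpermR.
  by rewrite tpermD //; apply/eqP; congruence.
by rewrite tpermD //; apply/eqP; congruence.
Qed.

Variable g : T1 -> {perm T2}.
Definition taup (l : seq T1) : {perm T1 * T2} := (\prod_(a <- l) fibp a (g a))%g.

Lemma taupE l z : uniq l -> taup l z = if z.1 \in l then (z.1, g z.1 z.2) else z.
Proof.
elim: l z => [|a l IH] z /=; first by rewrite /taup big_nil perm1.
case/andP=> al ul; rewrite /taup big_cons permM -/(taup l) fibpE /fib_fun in_cons.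
case: eqP => [->|za] /=; last by rewrite IH.
by rewrite IH //= (negbTE al).
Qed.

Lemma odd_taup l : (forall a, odd_perm (g a) = false) -> odd_perm (taup l) = false.
Proof.
move=> hg; elim: l => [|a l IH]; first by rewrite /taup big_nil odd_perm1.
by rewrite /taup big_cons odd_permM -/(taup l) IH odd_fibp hg.
Qed.

Definition lift_fun (s : {perm T1}) (z : T1 * T2) : T1 * T2 := (s z.1, z.2).
Lemma lift_inj s : injective (lift_fun s).
Proof. by move=> [x1 x2] [y1 y2] [/perm_inj -> ->]. Qed.
Definition liftp s : {perm T1 * T2} := perm (@lift_inj s).
Lemma liftpE s z : liftp s z = (s z.1, z.2).
Proof. by rewrite permE. Qed.

Lemma odd_liftp s : odd_perm (liftp s) = odd #|T2| && odd_perm s.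
Proof.
apply: odd_hom.
- by apply/permP => z; rewrite liftpE !perm1; case: z.
- by move=> u v; apply/permP => z; rewrite permM !liftpE permM.
move=> x y xy.
have E l : uniq l -> forall z, (\prod_(b <- l) tperm (x, b) (y, b))%g z =
    if z.2 \in l then (tperm x y z.1, z.2) else z.
  elim: l => [|b l IH] /=; first by move=> _ z; rewrite big_nil perm1.
  case/andP=> bl ul z; rewrite big_cons permM in_cons.
  case: z => z1 z2 /=; case: eqP => [->|zb] /=.
    have -> : tperm (x, b) (y, b) (z1, b) = (tperm x y z1, b).
      case: (tpermP x y z1) => [E|E|zx zy]; subst; first by rewrite tpermL.
        by rewrite tpermR.
      by rewrite tpermD //; apply/eqP; congruence.
    by rewrite IH //= (negbTE bl).
  by rewrite tpermD ?IH //; apply/eqP; congruence.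
have -> : liftp (tperm x y) = (\prod_(b <- enum T2) tperm (x, b) (y, b))%g.
  by apply/permP => z; rewrite E ?enum_uniq // mem_enum liftpE; case: z.
rewrite cardE; elim: (enum T2) => [|b l IH] /=; first by rewrite big_nil odd_perm1.
rewrite big_cons odd_permM IH odd_tperm.
by have -> : ((x, b) != (y, b)) by apply: contra xy => /eqP[->].
Qed.

End Fib.

Import GRing.Theory.

Section Chi.
Local Open Scope ring_scope.
Variables (F : finFieldType) (n : nat).
Local Notation M := 'M[F]_n.+1.

Lemma line_img (A : M) L : A \in unitmx -> is_line L -> is_line (plin_img A L).
Proof.
move=> Au /existsP[v /andP[v0 /eqP->]]; apply/existsP; exists (v *m A).
rewrite /plin_img -imset_comp; apply/andP; split.
  apply: contra v0 => /eqP vA0; apply/eqP; by rewrite -(mulmxK Au v) vA0 mul0mx.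
apply/eqP; apply: eq_imset => c /=; by rewrite scalemxAl.
Qed.

Definition pimg (A : M) (x : ppoint F n) : ppoint F n :=
  if A \in unitmx then insubd x (plin_img A (val x)) else x.

Lemma pimgE A x : A \in unitmx -> val (pimg A x) = plin_img A (val x).
Proof. by rewrite /pimg => Au; rewrite Au insubdK //; apply: line_img (valP x). Qed.

Lemma pimg_inj A : injective (pimg A).
Proof.
case Au: (A \in unitmx); last by move=> x y; rewrite /pimg Au.
move=> x y /(congr1 val); rewrite !pimgE // => H; apply: val_inj.
move: H; apply: imset_inj; apply: can_inj (mulmxK Au).
Qed.

Definition pperm A : {perm ppoint F n} := perm (@pimg_inj A).
Definition chi A := odd_perm (pperm A).

Lemma ppermM A B : A \in unitmx -> B \in unitmx ->
  pperm (A *m B) = (pperm A * pperm B)%g.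
Proof.
move=> Au Bu; apply/permP => x; rewrite permM !permE; apply: val_inj.
rewrite !pimgE ?unitmx_mul ?Au ?Bu // /plin_img -imset_comp.
by apply: eq_imset => v /=; rewrite mulmxA.
Qed.

Lemma chiM A B : A \in unitmx -> B \in unitmx -> chi (A *m B) = chi A (+) chi B.
Proof. by move=> Au Bu; rewrite /chi ppermM // odd_permM. Qed.

Lemma pperm1 : pperm 1%:M = 1%g.
Proof.
apply/permP => x; rewrite perm1 permE; apply: val_inj; rewrite pimgE ?unitmx1 //.
rewrite /plin_img -[RHS]imset_id; apply: eq_imset => v; by rewrite mulmx1.
Qed.

Lemma chi1 : chi 1%:M = false.
Proof. by rewrite /chi pperm1 odd_perm1. Qed.

Lemma chi_conj D X Y : D \in unitmx -> X \in unitmx -> Y \in unitmx ->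
  D *m X = Y *m D -> chi X = chi Y.
Proof.
move=> Du Xu Yu E; have := congr1 chi E; rewrite !chiM // => H.
by move: H; case: (chi D); case: (chi X); case: (chi Y).
Qed.


Definition trmx (u v : 'I_n.+1 -> F) : M := 1%:M + \matrix_(r, l) (u r * v l).

Lemma trmx_ext u u' v : (forall k, u k = u' k) -> trmx u v = trmx u' v.
Proof. by move=> E; congr (_ + _); apply/matrixP => r l; rewrite !mxE E. Qed.

Section Tr.
Variables (p : 'I_n.+1 -> bool).
Definition goodu (u : 'I_n.+1 -> F) := forall k, ~~ p k -> u k = 0.
Definition goodv (v : 'I_n.+1 -> F) := forall k, p k -> v k = 0.

Lemma uv0 u v k : goodu u -> goodv v -> v k * u k = 0.
Proof.
move=> hu hv; case: (boolP (p k)) => pk; first by rewrite (hv k pk) mul0r.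
by rewrite (hu k pk) mulr0.
Qed.

Lemma trmxM u u' v : goodu u -> goodu u' -> goodv v ->
  trmx u v *m trmx u' v = trmx (fun k => u k + u' k) v.
Proof.
move=> hu hu' hv; rewrite /trmx mulmxDl !mulmxDr !mul1mx mulmx1.
have -> : \matrix_(r, l) (u r * v l) *m \matrix_(r, l) (u' r * v l) = 0 :> M.
  apply/matrixP => r l; rewrite !mxE; apply: big1 => k _; rewrite !mxE.
  by rewrite mulrA -(mulrA (u r)) (uv0 _ hu' hv) mulr0 mul0r.
rewrite addr0 -addrA; congr (_ + _); apply/matrixP => r l; rewrite !mxE.
by rewrite mulrDl addrC.
Qed.

Lemma trmx_unit u v : goodu u -> goodv v -> trmx u v \in unitmx.
Proof.
move=> hu hv; have hu' : goodu (fun k => - u k) by move=> k /hu ->; rewrite oppr0.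
have := trmxM hu hu' hv; rewrite (@trmx_ext (fun k => u k + - u k) (fun _ => 0)); last by move=> k; rewrite subrr.
have -> : trmx (fun _ => 0) v = 1%:M.
  by rewrite /trmx; apply/matrixP => r l; rewrite !mxE mul0r addr0.
by case/mulmx1_unit.
Qed.

Definition dmx (c : F) : M := diag_mx (\row_k (if p k then c else 1)).

Lemma dmx_unit c : c != 0 -> dmx c \in unitmx.
Proof.
move=> c0; rewrite unitmxE det_diag unitfE; apply/prodf_neq0 => i _.
by rewrite mxE; case: ifP => //; rewrite oner_neq0.
Qed.

Lemma trmx_conj c u v : goodu u -> goodv v ->
  dmx c *m trmx u v = trmx (fun k => c * u k) v *m dmx c.
Proof.
move=> hu hv; rewrite mul_diag_mx mul_mx_diag; apply/matrixP => r l; rewrite !mxE.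
case: (eqVneq r l) => [->|rl].
  have := uv0 l hu hv; rewrite mulrC => H; by rewrite -mulrA H !mulr0 !addr0 mulrC.
rewrite -[false%:R]/(0%:R : F) !add0r.
case: (boolP (p r)) => pr; last by rewrite (hu r pr) !(mulr0, mul0r).
case: (boolP (p l)) => pl; first by rewrite (hv l pl) !(mulr0, mul0r).
by rewrite mulr1 mulrA.
Qed.

Lemma chi_trmx u v : goodu u -> goodv v -> (exists a : F, a != 0 /\ a != 1) ->
  chi (trmx u v) = false.
Proof.
move=> hu hv [a [a0 a1]].
have gc c : goodu (fun k => c * u k) by move=> k /hu ->; rewrite mulr0.
have E c : c != 0 -> chi (trmx (fun k => c * u k) v) = chi (trmx u v).
  move=> c0; apply/esym/(@chi_conj (dmx c)); rewrite ?dmx_unit ?trmx_unit //.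
  exact: trmx_conj.
have := trmxM hu (gc (a - 1)) hv.
rewrite (@trmx_ext (fun k => u k + (a - 1) * u k) (fun k => a * u k)); last by move=> k; rewrite mulrBl mul1r addrC subrK.
move/(congr1 chi); rewrite chiM ?trmx_unit // (E a a0) (E (a - 1)) ?subr_eq0 //.
by case: (chi _).
Qed.
End Tr.

Hypothesis ha : exists a : F, a != 0 /\ a != 1.

Lemma upper_ok k : forall N : M, (forall r l : 'I_n.+1, (l <= r)%N -> N r l = 0) ->
  (forall r l : 'I_n.+1, (k <= l)%N -> N r l = 0) ->
  (1%:M + N \in unitmx) && ~~ chi (1%:M + N).
Proof.
elim: k => [|k IH] N hs hk.
  have -> : N = 0 by apply/matrixP => r l; rewrite mxE hk.
  by rewrite addr0 unitmx1 chi1.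
case: (ltnP k n.+1) => [kn|kn]; last first.
  apply: IH => // r l kl; exfalso; move: (ltn_ord l); rewrite ltnNge.
  by rewrite (leq_trans kn kl).
pose K := Ordinal kn.
pose N' := \matrix_(r, l) (if l == K then 0 else N r l) : M.
pose u := fun r : 'I_n.+1 => N r K.
pose v := fun l : 'I_n.+1 => ((l == K)%:R : F).
pose p := fun r : 'I_n.+1 => (r < k)%N.
have hu : goodu p u by move=> r; rewrite /p -leqNgt => kr; apply: hs.
have hv : goodv p v.
  by move=> r; rewrite /p /v => rk; case: eqP => // E; move: rk; rewrite E ltnn.
have XN : \matrix_(r, l) (u r * v l) *m N' = 0.
  apply/matrixP => r l; rewrite !mxE; apply: big1 => j _; rewrite !mxE /v.
  case: (eqVneq j K) => [->|]; last by rewrite mulr0 mul0r.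
  case: (eqVneq l K) => [_|lK]; first by rewrite mulr0.
  case: (leqP l K) => lK'; first by rewrite hs // mulr0.
  by rewrite hk ?mulr0.
have E : 1%:M + N = trmx u v *m (1%:M + N').
  rewrite /trmx mulmxDl !mulmxDr XN !mul1mx mulmx1 addr0.
  apply/matrixP => r l; rewrite !mxE /u /v.
  case: (eqVneq l K) => [->|lK]; first by rewrite addr0 /= mulr1n mulr1.
  by rewrite /= mulr0n mulr0 addr0.
have /andP[N'u N'c] : (1%:M + N' \in unitmx) && ~~ chi (1%:M + N').
  apply: IH => r l; rewrite !mxE.
    by move=> lr; case: eqP => // _; apply: hs.
  by move=> kl; case: eqP => // /eqP lK; apply: hk; rewrite ltn_neqAle kl andbT eq_sym.
rewrite E unitmx_mul (trmx_unit hu hv) N'u chiM ?(trmx_unit hu hv) //.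
by rewrite (chi_trmx hu hv ha) (negbTE N'c).
Qed.

Lemma lower_ok k : forall N : M, (forall r l : 'I_n.+1, (r <= l)%N -> N r l = 0) ->
  (forall r l : 'I_n.+1, (k <= r)%N -> N r l = 0) ->
  (1%:M + N \in unitmx) && ~~ chi (1%:M + N).
Proof.
elim: k => [|k IH] N hs hk.
  have -> : N = 0 by apply/matrixP => r l; rewrite mxE hk.
  by rewrite addr0 unitmx1 chi1.
case: (ltnP k n.+1) => [kn|kn]; last first.
  apply: IH => // r l kr; exfalso; move: (ltn_ord r); rewrite ltnNge.
  by rewrite (leq_trans kn kr).
pose K := Ordinal kn.
pose N' := \matrix_(r, l) (if r == K then 0 else N r l) : M.
pose u := fun r : 'I_n.+1 => ((r == K)%:R : F).
pose v := fun l : 'I_n.+1 => N K l.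
pose p := fun r : 'I_n.+1 => r == K.
have hu : goodu p u by move=> r; rewrite /p /u => /negbTE ->.
have hv : goodv p v by move=> r; rewrite /p /v => /eqP ->; apply: hs.
have NX : N' *m \matrix_(r, l) (u r * v l) = 0.
  apply/matrixP => r l; rewrite !mxE; apply: big1 => j _; rewrite !mxE /u.
  case: (eqVneq j K) => [->|]; last by rewrite mul0r mulr0.
  case: (eqVneq r K) => [_|rK]; first by rewrite mul0r.
  case: (leqP r K) => rK'; first by rewrite hs // mul0r.
  by rewrite hk ?mul0r.
have E : 1%:M + N = (1%:M + N') *m trmx u v.
  rewrite /trmx mulmxDr !mulmxDl NX !mul1mx mulmx1 addr0.
  apply/matrixP => r l; rewrite !mxE /u /v.
  case: (eqVneq r K) => [->|rK]; first by rewrite addr0 /= mulr1n mul1r.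
  by rewrite /= mulr0n mul0r addr0.
have /andP[N'u N'c] : (1%:M + N' \in unitmx) && ~~ chi (1%:M + N').
  apply: IH => r l; rewrite !mxE.
    by move=> lr; case: eqP => // _; apply: hs.
  by move=> kl; case: eqP => // /eqP lK; apply: hk; rewrite ltn_neqAle kl andbT eq_sym.
rewrite E unitmx_mul (trmx_unit hu hv) N'u chiM ?(trmx_unit hu hv) //.
by rewrite (chi_trmx hu hv ha) (negbTE N'c).
Qed.

Variable m : nat.
Hypothesis hq : #|F| = (2 ^ m)%N.
Hypothesis hm : (1 <= m)%N.

Lemma two0 : (2%:R : F) = 0.
Proof. by apply: pcharf0; apply: (card_finPcharP hq). Qed.

Lemma chi_diag (d : 'rV[F]_n.+1) : (forall i, d 0 i != 0) -> chi (diag_mx d) = false.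
Proof.
move=> d0; pose e := \row_i (d 0 i ^+ (2 ^ m.-1)).
have eu : diag_mx e \in unitmx.
  rewrite unitmxE det_diag unitfE; apply/prodf_neq0 => i _.
  by rewrite mxE expf_neq0.
have -> : diag_mx d = diag_mx e *m diag_mx e.
  rewrite mul_diag_mx; apply/matrixP => i j; rewrite !mxE mulrnAr -exprD addnn.
  by rewrite -mul2n -expnS prednK // -hq expf_card.
by rewrite chiM //; case: (chi _).
Qed.

Lemma chi_tperm (i j : 'I_n.+1) : chi (tperm_mx i j) = false.
Proof.
case: (eqVneq i j) => [->|ij].
  by rewrite /tperm_mx tperm1 perm_mx1 chi1.
pose u1 := fun r : 'I_n.+1 => ((r == i)%:R : F).
pose v1 := fun r : 'I_n.+1 => ((r == j)%:R : F).
have hu1 : goodu (fun r => r == i) u1 by move=> r /negbTE; rewrite /u1 => ->.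
have hv1 : goodv (fun r => r == i) v1.
  by move=> r /eqP ->; rewrite /v1 (negbTE ij).
have hu2 : goodu (fun r => r == j) v1 by move=> r /negbTE; rewrite /v1 => ->.
have hv2 : goodv (fun r => r == j) u1.
  by move=> r /eqP ->; rewrite /u1 eq_sym (negbTE ij).
have E1 : trmx u1 v1 = 1%:M + delta_mx i j.
  by congr (_ + _); apply/matrixP => r l; rewrite !mxE -natrM mulnb.
have E2 : trmx v1 u1 = 1%:M + delta_mx j i.
  by congr (_ + _); apply/matrixP => r l; rewrite !mxE -natrM mulnb.
have -> : tperm_mx i j = trmx u1 v1 *m trmx v1 u1 *m trmx u1 v1.
  rewrite E1 E2 !mulmxDl !mulmxDr !mul1mx !mulmx1 !mul_delta_mx.
  rewrite !mulmxDl !mul1mx !mul_delta_mx.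
  rewrite (@mul_delta_mx_0 F n.+1 n.+1 n.+1 j i i j); last by rewrite eq_sym.
  rewrite /tperm_mx perm_mxEsub; apply/matrixP => r l; rewrite !mxE.
  have t0 : (1 + 1 : F) = 0 by rewrite -two0.
  have ji : j != i by rewrite eq_sym.
  case: (eqVneq r i) => [->|ri]; first rewrite tpermL.
    case: (eqVneq l j) => [->|lj].
      by rewrite ?(negbTE ij) ?(negbTE ji) /= !(addr0, add0r) t0 addr0.
    case: (eqVneq l i) => [Eli|li]; last by rewrite (negbTE ij) /= !(addr0, add0r).
    subst l.
    by rewrite ?(negbTE ij) ?(negbTE ji) /= !(addr0, add0r).
  case: (eqVneq r j) => [->|rj]; first rewrite tpermR.
    case: (eqVneq l i) => [->|li]; first by rewrite ?(negbTE ij) ?(negbTE ji) /= !(addr0, add0r).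
    rewrite ?(negbTE li) ?(negbTE ji) /= !(addr0, add0r).
    by case: (eqVneq l j) => [Elj|lj]; rewrite /= ?t0 ?addr0.
  by rewrite tpermD 1?eq_sym // /= !addr0.

rewrite !chiM ?unitmx_mul ?(trmx_unit hu1 hv1) ?(trmx_unit hu2 hv2) //.
by rewrite (chi_trmx hu1 hv1 ha) (chi_trmx hu2 hv2 ha).
Qed.

Lemma chi_perm (s : {perm 'I_n.+1}) : chi (perm_mx s) = false.
Proof.
have [ts -> _] := prod_tpermP s.
elim: ts => [|t ts IH]; first by rewrite big_nil perm_mx1 chi1.
by rewrite big_cons perm_mxM chiM ?unitmx_perm // (chi_tperm t.1 t.2) IH.
Qed.

Lemma chi_unit (A : M) : A \in unitmx -> chi A = false.
Proof.
move=> Au.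
have := cormen_lup_correct A; have := cormen_lup_perm A.
have := @cormen_lup_lower _ _ A; have := @cormen_lup_upper _ _ A.
case: cormen_lup => [[P L] U] /= hU hL /is_perm_mxP[s ->] E.
rewrite -!mulmxE in E.
have /andP[Lu Lc] : (1%:M + (L - 1%:M) \in unitmx) && ~~ chi (1%:M + (L - 1%:M)).
  apply: (@lower_ok n.+1) => r l; last by move=> nr; have := ltn_ord r; rewrite ltnNge nr.
  move=> rl; rewrite !mxE hL //; exact: subrr.
rewrite addrC subrK in Lu Lc.
have Uu : U \in unitmx.
  have : L *m U \in unitmx by rewrite -E unitmx_mul unitmx_perm.
  by rewrite unitmx_mul => /andP[].
have Ud : forall i, U i i != 0.
  move: Uu; rewrite unitmxE -det_tr det_trig; last first.
    by apply/is_trig_mxP => i j ij; rewrite mxE hU.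
  rewrite unitfE => /prodf_neq0 H i; move: (H i isT); by rewrite mxE.
pose dU := \row_i U i i; pose dV := \row_i (U i i)^-1.
have DD : diag_mx dV *m diag_mx dU = 1%:M.
  rewrite mul_diag_mx; apply/matrixP => i j; rewrite !mxE mulrnAr mulVf //.
have DUu : diag_mx dU \in unitmx by case/mulmx1_unit: DD.
have /andP[U1u U1c] : (1%:M + (U *m diag_mx dV - 1%:M) \in unitmx) &&
     ~~ chi (1%:M + (U *m diag_mx dV - 1%:M)).
  apply: (@upper_ok n.+1) => r l; last by move=> nl; have := ltn_ord l; rewrite ltnNge nl.
  rewrite leq_eqVlt => /orP[/eqP rl|lr].
    have -> : r = l by apply: val_inj.
    by rewrite mul_mx_diag !mxE eqxx mulfV //= subrr.
  rewrite mul_mx_diag !mxE hU // mul0r (_ : (r == l) = false) ?subrr //.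
  by apply/negbTE; apply: contraTneq lr => ->; rewrite ltnn.
rewrite addrC subrK in U1u U1c.
have EU : U = U *m diag_mx dV *m diag_mx dU by rewrite -mulmxA DD mulmx1.
have := congr1 chi E; rewrite chiM ?unitmx_perm // chi_perm /= => ->.
have U1D : U *m diag_mx dV *m diag_mx dU \in unitmx by rewrite unitmx_mul U1u DUu.
rewrite EU chiM // chiM // (negbTE Lc) (negbTE U1c).
by rewrite chi_diag // => i; rewrite mxE.
Qed.

End Chi.

Section Count.
Local Open Scope ring_scope.

Lemma odd_ppoint (F : finFieldType) (n m : nat) :
  #|F| = (2 ^ m)%N -> (0 < m)%N -> odd #|{: ppoint F n}|.
Proof.
move=> hq hm.
pose line (v : 'rV[F]_n.+1) := [set c *: v | c : F].
have lineE w : w != 0 -> #|line w| = #|F|.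
  move=> w0; rewrite card_imset // => c d /eqP.
  rewrite -subr_eq0 -scalerBl scalemx_eq0 (negbTE w0) orbF subr_eq0.
  by move/eqP.
have key L : is_line L -> #|[set v | (v != 0) && (line v == L)]| = #|F|.-1.
  case/existsP=> w /andP[w0 /eqP ->].
  have -> : [set v | (v != 0) && (line v == [set c *: w | c : F])] = line w :\ 0.
    apply/setP => v; rewrite !inE; case: (eqVneq v 0) => [->|v0] //=.
    apply/eqP/imsetP.
      move=> E; have : v \in line v by apply/imsetP; exists 1 => //; rewrite scale1r.
      by rewrite E => /imsetP.
    case=> c _ vE; have c0 : c != 0 by apply: contra_neq v0 => c0; rewrite vE c0 scale0r.
    apply/setP => u; apply/imsetP/imsetP => -[d _ ->].
      by exists (d * c) => //; rewrite vE scalerA.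
    by exists (d / c) => //; rewrite vE scalerA mulfVK.
  have := cardsD1 0 (line w); rewrite lineE //.
  have -> : (0 : 'rV[F]_n.+1) \in line w by apply/imsetP; exists 0 => //; rewrite scale0r.
  by move=> ->.
have cnt : #|[set~ (0 : 'rV[F]_n.+1)]| = (#|{: ppoint F n}| * #|F|.-1)%N.
  rewrite -sum1_card (partition_big (fun v => line v) (fun L => is_line L)) /=; last first.
    by move=> v; rewrite in_setC1 => v0; apply/existsP; exists v; rewrite v0 eqxx.
  rewrite card_sig -sum_nat_const; apply: eq_bigr => L HL.
  rewrite -(key L HL) -sum1_card; apply: eq_bigl => v; by rewrite !inE.
move: cnt; rewrite cardsC1 card_mx hq mul1n => E.
have : odd ((2 ^ m) ^ n.+1).-1.
  have hpos : (0 < (2 ^ m) ^ n.+1)%N by rewrite !expn_gt0.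
  move: (oddX (2 ^ m) n.+1); rewrite -(prednK hpos) /= oddX.
  by rewrite (gtn_eqF hm) /= => /negbT; rewrite negbK.
by rewrite E oddM => /andP[].
Qed.
End Count.

Theorem lemma3p7 (m : nat) (F : finFieldType) (n : nat) (B : finType)
  (hq : #|F| = 2 ^ m) (hm : 2 <= m) (hn : 1 <= n)
  (sigma : {perm (B * ppoint F n)}) (sigmaB : {perm B})
  (h1 : forall (i : B) (x : ppoint F n), (sigma (i, x)).1 = sigmaB i)
  (h2 : forall i : B, exists2 A : 'M[F]_n.+1, A \in unitmx &
        forall x : ppoint F n, val (sigma (i, x)).2 = plin_img A (val x)) :
  odd_perm sigma = odd_perm sigmaB.
Proof.
have hm1 : 0 < m by apply: leq_trans hm.
have ha : exists a : F, (a != 0%R) /\ (a != 1%R).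
  case: (boolP [exists a : F, (a != 0%R) && (a != 1%R)]) => [/existsP[a /andP[? ?]]|H].
    by exists a.
  exfalso.
  have S : [set: F] \subset [set 0%R; 1%R].
    apply/subsetP => x _; rewrite !inE; move: H; rewrite negb_exists => /forallP/(_ x).
    by case: (x == 0%R); case: (x == 1%R).
  have := subset_leq_card S; rewrite cardsT cards2 eq_sym GRing.oner_neq0 hq.
  by rewrite -[X in _ <= X]expn1 leq_exp2l // leqNgt hm.
have ginj : forall i, injective (fun x => (sigma (i, x)).2).
  move=> i x y E; suff: (i, x) = (i, y) by case.
  apply: (@perm_inj _ sigma); move: (h1 i x) (h1 i y) E.
  by case: (sigma (i, x)) => a b; case: (sigma (i, y)) => c d /= -> -> ->.
pose g i : {perm ppoint F n} := perm (ginj i).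
have godd : forall i, odd_perm (g i) = false.
  move=> i; have [A Au hA] := h2 i.
  have -> : g i = pperm A.
    by apply/permP => x; rewrite !permE; apply: val_inj; rewrite pimgE // hA.
  exact: (chi_unit ha hq hm1 Au).
have Es : sigma = (taup g (enum B) * liftp (ppoint F n) sigmaB)%g.
  apply/permP => -[i x]; rewrite permM taupE ?enum_uniq // mem_enum liftpE /= permE.
  by rewrite -(h1 i x); case: (sigma (i, x)).
by rewrite Es odd_permM odd_taup // odd_liftp (odd_ppoint n hq hm1).
Qed.
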